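(* Let $R$ be a DT ring with $2\in U(R)$. Then $\Delta(R)$ is a two-sided ideal of $R$, and $\Delta(R)=J(R)$.
   Context: All rings are associative with identity; $J(R)$ is the Jacobson radical, $U(R)$ the group of units. $\Delta(R)=\{x\in R: x+u\in U(R)\text{ for all }u\in U(R)\}$. $\mathrm{Tr}(R)=\{x\in R: x^3=x\}$. A ring $R$ is a DT ring if every $r\in R$ can be written $r=e+d$ with $e\in\mathrm{Tr}(R)$ and $d\in\Delta(R)$. *)

(* Defs.v *)
From mathcomp Require Import all_boot all_algebra.
Set Implicit Arguments. Unset Strict Implicit. Unset Printing Implicit Defensive.
Import GRing.Theory.
Local Open Scope ring_scope.

Definition Delta (R : unitRingType) (x : R) : Prop :=
  forall u : R, u \is a GRing.unit -> (x + u) \is a GRing.unit.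

Definition Tr (R : unitRingType) (x : R) : Prop := x ^+ 3 = x.

Definition DT_ring (R : unitRingType) : Prop :=
  forall r : R, exists e d : R, Tr e /\ Delta d /\ r = e + d.

Definition left_ideal (R : unitRingType) (I : R -> Prop) : Prop :=
  I 0 /\ (forall x y, I x -> I y -> I (x + y)) /\ (forall x, I x -> I (- x))
  /\ (forall r x, I x -> I (r * x)).

Definition two_sided_ideal (R : unitRingType) (I : R -> Prop) : Prop :=
  left_ideal I /\ (forall x r, I x -> I (x * r)).

Definition maximal_left_ideal (R : unitRingType) (M : R -> Prop) : Prop :=
  left_ideal M /\ ~ M 1 /\
  (forall N : R -> Prop, left_ideal N -> ~ N 1 -> (forall x, M x -> N x) ->
     forall x, N x -> M x).

Definition Jac (R : unitRingType) (x : R) : Prop :=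
  forall M : R -> Prop, maximal_left_ideal M -> M x.

(* Main.v *)
Require Import Defs.
From Stdlib Require Import Classical.
From mathcomp Require Import all_boot all_algebra.
From mathcomp Require Import classical_sets.
Import GRing.Theory.
Local Open Scope ring_scope.
Set Implicit Arguments. Unset Strict Implicit.

Section DeltaFacts.
Variable R : unitRingType.
Implicit Types x y u v : R.

Lemma Delta0 : Delta (0 : R).
Proof. by move=> u Hu; rewrite add0r. Qed.

Lemma DeltaD x y : Delta x -> Delta y -> Delta (x + y).
Proof. by move=> Hx Hy u Hu; rewrite -addrA; apply: Hx; apply: Hy. Qed.

Lemma DeltaN x : Delta x -> Delta (- x).
Proof.
move=> Hx u Hu; have : x + - u \is a GRing.unit by apply: Hx; rewrite unitrN.
by rewrite -unitrN opprD opprK.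
Qed.

Lemma DeltaMl u x : u \is a GRing.unit -> Delta x -> Delta (u * x).
Proof.
move=> Hu Hx v Hv.
have -> : u * x + v = u * (x + u^-1 * v) by rewrite mulrDr mulVKr.
rewrite unitrMr //; apply: Hx; by rewrite unitrMl // unitrV.
Qed.

Lemma DeltaMr u x : u \is a GRing.unit -> Delta x -> Delta (x * u).
Proof.
move=> Hu Hx v Hv.
have -> : x * u + v = (x + v * u^-1) * u by rewrite mulrDl mulrVK.
rewrite unitrMl //; apply: Hx; by rewrite unitrMr // unitrV.
Qed.

Lemma DeltaM x y : Delta x -> Delta y -> Delta (x * y).
Proof.
move=> Hx Hy v Hv.
pose a := v^-1 * x.
have Ha : Delta a by apply: DeltaMl; rewrite ?unitrV.
have -> : x * y + v = v * (a * (y - 1) + (a + 1)).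
  by rewrite mulrBr mulr1 addrA subrK /a -mulrA mulrDr mulr1 mulVKr.
have Hy1 : y - 1 \is a GRing.unit by apply: Hy; rewrite unitrN unitr1.
rewrite unitrMr //; apply: (DeltaMr Hy1 Ha).
exact: (Ha 1 (unitr1 R)).
Qed.

Lemma trip_units e : e ^+ 3 = e ->
  exists u v : R, u \is a GRing.unit /\ v \is a GRing.unit /\ u + v = e *+ 2.
Proof.
move=> He.
set f := e * e. set g := 1 - f.
have eee : e * f = e by rewrite /f mulrA -expr2 -exprSr.
have fe : f * e = e by rewrite /f -mulrA eee.
have ff : f * f = f by rewrite {1}/f -mulrA eee.
have eg : e * g = 0 by rewrite /g mulrBr mulr1 eee subrr.
have ge : g * e = 0 by rewrite /g mulrBl mul1r fe subrr.
have gg : g * g = g by rewrite {1}/g mulrBl mul1r /g mulrBr mulr1 ff subrr subr0.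
have fg : f + g = 1 by rewrite /g addrC subrK.
have ef : e * e = f by [].
clearbody f g.
exists (e + g), (e - g); split; [|split].
- apply/unitrP; exists (e + g).
  have -> : (e + g) * (e + g) = 1 by rewrite mulrDl !mulrDr ef eg ge gg addr0 add0r fg.
  by [].
- apply/unitrP; exists (e - g).
  have -> : (e - g) * (e - g) = 1.
    by rewrite mulrBl !mulrBr ef eg ge gg subr0 sub0r opprK fg.
  by [].
- by rewrite addrACA subrr addr0 mulr2n.
Qed.

Lemma DeltaMtrip e x : (2%:R : R) \is a GRing.unit -> e ^+ 3 = e -> Delta x ->
  Delta (e * x) /\ Delta (x * e).
Proof.
move=> H2 He Hx; have [u [v [Hu [Hv Huv]]]] := trip_units He.
have Ee : e = 2%:R^-1 * (u + v) by rewrite Huv -(mulr_natl e 2) mulKr.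
split.
- rewrite Ee -mulrA mulrDl mulrDr; apply: DeltaD; apply: DeltaMl;
    rewrite ?unitrV //; exact: DeltaMl.
- rewrite Ee mulrA mulrDr; apply: DeltaD; apply: DeltaMr => //;
    apply: DeltaMr; rewrite ?unitrV //.
Qed.


Lemma Delta_ideal : DT_ring R -> (2%:R : R) \is a GRing.unit -> two_sided_ideal (@Delta R).
Proof.
move=> HDT H2; split; [split; [exact: Delta0|split; [exact: DeltaD|split; [exact: DeltaN|]]]|].
- move=> r x Hx; have [e [d [He [Hd ->]]]] := HDT r.
  rewrite mulrDl; apply: DeltaD; [exact: (DeltaMtrip H2 He Hx).1 | exact: DeltaM].
- move=> x r Hx; have [e [d [He [Hd ->]]]] := HDT r.
  rewrite mulrDr; apply: DeltaD; [exact: (DeltaMtrip H2 He Hx).2 | exact: DeltaM].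
Qed.

Lemma Delta_Jac : two_sided_ideal (@Delta R) -> forall x, Delta x -> Jac x.
Proof.
move=> [[_ [_ [_ DL]]] _] x Hx M [[M0 [MD [MN MM]]] [M1 Mmax]].
apply: NNPP => nMx.
pose N := fun y => exists m r, M m /\ y = m + r * x.
have NL : left_ideal N.
  split; [|split; [|split]].
  - by exists 0, 0; rewrite mul0r addr0.
  - move=> _ _ [m1 [r1 [H1 ->]]] [m2 [r2 [H2 ->]]]; exists (m1 + m2), (r1 + r2).
    by split; [exact: MD | rewrite mulrDl addrACA].
  - move=> _ [m [r [H ->]]]; exists (- m), (- r).
    by split; [exact: MN | rewrite opprD mulNr].
  - move=> s _ [m [r [H ->]]]; exists (s * m), (s * r).
    by split; [exact: MM | rewrite mulrDr mulrA].
have MN' : forall y, M y -> N y by move=> y My; exists y, 0; rewrite mul0r addr0.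
have N1 : N 1.
  apply: NNPP => nN1; apply: nMx; apply: (Mmax N NL nN1 MN').
  by exists 0, 1; rewrite add0r mul1r.
case: N1 => m [r [Hm E]].
have Hmu : m \is a GRing.unit.
  have -> : m = - (r * x) + 1 by rewrite E (addrC m) addKr.
  by apply: DeltaN; [apply: DL | apply: unitr1].
by apply: M1; have := MM m^-1 m Hm; rewrite mulVr.
Qed.

Lemma Jac_left x r : Jac x -> Jac (r * x).
Proof. move=> Hx M HM; case: (HM) => [[_ [_ [_ MM]]] _]; exact: MM _ _ (Hx M HM). Qed.

Lemma exists_max (L0 : R -> Prop) : left_ideal L0 -> ~ L0 1 ->
  exists M, maximal_left_ideal M /\ forall z, L0 z -> M z.
Proof.
move=> HL H1.
pose P := fun X : set R => (forall z, ~ X z) \/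
   (left_ideal X /\ ~ X 1 /\ forall z, L0 z -> X z).
have := @Zorn_bigcup R P; case.
- move=> F FP Ftot.
  case: (classic (exists z X, F X /\ X z)) => [[z0 [X0 [FX0 X0z]]] | hne]; last first.
    by left => z [X FX Xz]; apply: hne; exists z, X.
  right.
  have ideal_of : forall X z, F X -> X z ->
      left_ideal X /\ ~ X 1 /\ forall z, L0 z -> X z.
    by move=> X z FX Xz; case: (FP X FX) => [h|//]; case: (h z).
  have [IX0 [nX01 LX0]] := ideal_of _ _ FX0 X0z.
  split; [split; [|split; [|split]] | split].
  + by exists X0; [exact: FX0 | exact: IX0.1].
  + move=> a b [Xa FXa Xaa] [Xb FXb Xbb].
    case: (Ftot Xa Xb FXa FXb) => sub.
    * exists Xb => //; have [[_ [D _]] _] := ideal_of _ _ FXb Xbb.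
      by apply: D => //; apply: sub.
    * exists Xa => //; have [[_ [D _]] _] := ideal_of _ _ FXa Xaa.
      by apply: D => //; apply: sub.
  + move=> a [X FX Xa]; exists X => //.
    by have [[_ [_ [Ng _]]] _] := ideal_of _ _ FX Xa; apply: Ng.
  + move=> r a [X FX Xa]; exists X => //.
    by have [[_ [_ [_ Mg]]] _] := ideal_of _ _ FX Xa; apply: Mg.
  + by move=> [X FX X1]; have [_ [h _]] := ideal_of _ _ FX X1; exact: h.
  + by move=> z Lz; exists X0 => //; exact: LX0.
- move=> A [PA Amax].
  case: PA => [Aempty | [IA [nA1 LA]]].
    exfalso; apply: (Amax L0).
      split; first by move=> z Az; case: (Aempty z).
      by move=> sub; apply: (Aempty 0); apply: sub; exact: HL.1.
    by right; split; [exact: HL | split].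
  exists A; split; [split; [exact: IA | split; [exact: nA1 |]] | exact: LA].
  move=> N IN nN1 sub x Nx; apply: NNPP => nAx; apply: (Amax N).
    by split; [exact: sub | move=> h; apply: nAx; exact: h].
  by right; split; [|split] => // z Lz; apply: sub; exact: LA.
Qed.

Lemma Jac_linv y : Jac y -> exists s, s * (1 + y) = 1.
Proof.
move=> Hy; apply: NNPP => H.
pose L0 := fun z => exists r, z = r * (1 + y).
have HL : left_ideal L0.
  split; [|split; [|split]].
  - by exists 0; rewrite mul0r.
  - by move=> _ _ [a ->] [b ->]; exists (a + b); rewrite mulrDl.
  - by move=> _ [a ->]; exists (- a); rewrite mulNr.
  - by move=> s _ [a ->]; exists (s * a); rewrite mulrA.
have nL1 : ~ L0 1 by move=> [r E]; apply: H; exists r; rewrite -E.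
have [M [HM LM]] := exists_max HL nL1.
have M1y : M (1 + y) by apply: LM; exists 1; rewrite mul1r.
have My : M y := Hy M HM.
case: HM => [[_ [MD [MN _]]] [nM1 _]]; apply: nM1.
by have := MD _ _ M1y (MN _ My); rewrite addrK.
Qed.

Lemma Jac_unit y : Jac y -> (1 + y) \is a GRing.unit.
Proof.
move=> Hy; have [s Hs] := Jac_linv Hy.
have Hs' : s = 1 + - (s * y) by rewrite -Hs mulrDr mulr1 addrK.
have Jsy : Jac (- (s * y)) by rewrite -mulNr; exact: Jac_left.
have [t Ht] := Jac_linv Jsy; rewrite -Hs' in Ht.
have Et : t = 1 + y.
  by have := congr1 (fun z => t * z) Hs; rewrite /= mulrA Ht mul1r mulr1 => <-.
by apply/unitrP; exists s; split; [exact: Hs | rewrite -Et Ht].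
Qed.

Lemma Jac_Delta x : Jac x -> Delta x.
Proof.
move=> Hx u Hu.
have -> : x + u = u * (1 + u^-1 * x) by rewrite mulrDr mulr1 mulVKr // addrC.
by rewrite unitrMr //; apply: Jac_unit; exact: Jac_left.
Qed.

End DeltaFacts.

Theorem proposition4p3 (R : unitRingType) :
  DT_ring R -> (2%:R : R) \is a GRing.unit ->
  two_sided_ideal (@Delta R) /\ (forall x : R, Delta x <-> Jac x).
Proof.
move=> HDT H2; have Hid := Delta_ideal HDT H2.
split => // x; split; [exact: Delta_Jac | exact: Jac_Delta].
Qed.
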